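(* Consider the closed-loop cycle–rider error system described in the context, and fix an index $n\in\{0,1,2,\dots\}$. Suppose that on the open interval $(t_n^{on},t_n^{off})$ the crank angle stays in the controlled region, i.e. $q(t)\in\mathcal{Q}_c$ for all $t\in(t_n^{on},t_n^{off})$, so that $z=[e_1,\ e_2]^T$ is a Filippov solution of $$\dot e_1=e_2-\alpha e_1,\qquad M\dot e_2=\chi-Ve_2+B_k^s\Omega^s\Big[k_1e_2+\big(k_2+k_3\|z\|+k_4\|z\|^2\big)\operatorname{sgn}(e_2)\Big],$$ where $s\in\{R,L\}$ is the leg with $q(t)\in\mathcal{Q}^s$. Assume the gain conditions $$\alpha>\tfrac12,\quad k_1>\frac{1}{2\varepsilon c_{\Omega1}},\quad k_2\ge\frac{c_1}{\varepsilon c_{\Omega1}},\quad k_3\ge\frac{c_2}{\varepsilon c_{\Omega1}},\quad k_4\ge\frac{c_3}{\varepsilon c_{\Omega1}}.$$ Then, with $\gamma_1:=\min\!\big(\alpha-\tfrac12,\ \varepsilon c_{\Omega1}k_1-\tfrac12\big)>0$, $\lambda_1:=\min(\tfrac12,\tfrac{c_m}{2})$ and $\lambda_2:=\max(\tfrac12,\tfrac{c_M}{2})$, $$\|z(t)\|\le\sqrt{\frac{\lambda_2}{\lambda_1}}\,\|z(t_n^{on})\|\,e^{-\frac{\gamma_1}{2\lambda_2}(t-t_n^{on})}\qquad\text{for all }t\in(t_n^{on},t_n^{off}).$$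
   Context: Model. The crank angle $q(t)\in\mathbb{R}$ of a stationary cycle with a two-legged rider obeys $$M\ddot q+V\dot q+G+\tau_d-\tau_b-P=\sum_{s\in\{R,L\}}B_k^s\,\Omega^s\,u^s,$$ where $\tau_b=-c\dot q$ with unknown constant $c>0$; $M$ (inertia), $V$ (centripetal/Coriolis), $G$ (gravity), $\tau_d$ (unknown time-varying disturbance), $P$ (passive viscoelastic joint effects), $B_k^s$ (Jacobian element relating knee torque of leg $s$ to crank torque, a known function of $q$) and $\Omega^s$ (uncertain function relating stimulation input to knee torque) are real-valued functions of the state and time, and $u^s$ is the stimulation input to the quadriceps of leg $s\in\{R,L\}$. Standing assumptions (known positive constants): $c_m\le M\le c_M$; $|V|\le c_V|\dot q|$; $|G|\le c_G$; $|\tau_d|\le c_d$; $|B_k^s|\le c_B$; $|P|\le c_{P1}+c_{P2}|\dot q|$; $c_{\Omega1}\le\Omega^s\le c_{\Omega2}$; and $\tfrac12\dot M-V=0$ along trajectories. Switching regions. Fix $\varepsilon>0$ with $\varepsilon<\max(-B_k)$. Define $\mathcal{Q}^s:=\{q: -B_k^s(q)>\varepsilon\}$ for $s\in\{R,L\}$, the controlled region $\mathcal{Q}_c:=\mathcal{Q}^R\cup\mathcal{Q}^L$ (with $\mathcal{Q}^R\cap\mathcal{Q}^L=\emptyset$) and the uncontrolled region $\mathcal{Q}_u$ as its complement. The input is $u^s=v$ if $q\in\mathcal{Q}^s$ and $u^s=0$ otherwise; in particular in $\mathcal{Q}_u$ no input acts. Assuming $q$ starts in $\mathcal{Q}_c$,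 the switching times $t_0^{on}<t_0^{off}<t_1^{on}<t_1^{off}<\cdots$ are the successive times at which $q$ enters $\mathcal{Q}_c$ ($t_n^{on}$) and enters $\mathcal{Q}_u$ ($t_n^{off}$); $t_0^{on}$ is the initial time. Errors and controller. Given a desired crank angle $q_d(t)$ with $\dot q_d,\ddot q_d$ bounded, and a constant $\alpha>0$, set $e_1:=q_d-q$, $e_2:=\dot e_1+\alpha e_1$, $z:=[e_1,\ e_2]^T$. Then $M\dot e_2=\chi-Ve_2-B_k^s\Omega^s v$ in $\mathcal{Q}^s$ and $M\dot e_2=\chi-Ve_2$ in $\mathcal{Q}_u$, where $\chi:=M(\ddot q_d+\alpha\dot e_1)+V(\dot q_d+\alpha e_1)+G+\tau_d-\tau_b-P$. It is assumed that there are known constants $c_1,c_2,c_3>0$ with $|\chi|\le c_1+c_2\|z\|+c_3\|z\|^2$. The control is $v:=-k_1e_2-(k_2+k_3\|z\|+k_4\|z\|^2)\operatorname{sgn}(e_2)$ with constants $k_1,k_2,k_3,k_4>0$; solutions are understood in the sense of Filippov. *)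

(* Defs.v *)
From Stdlib Require Import Reals Lra.
Open Scope R_scope.

Fixpoint rsum (n : nat) (g : nat -> R) : R :=
  match n with O => 0 | S k => rsum k g + g k end.

(* Lebesgue-null set: covered by countably many open intervals of
   arbitrarily small total length. *)
Definition negligible (N : R -> Prop) : Prop :=
  forall eps, 0 < eps -> exists a b : nat -> R,
    (forall x, N x -> exists k, a k < x < b k) /\
    (forall k, a k <= b k) /\
    (forall n, rsum n (fun k => b k - a k) <= eps).

Definition ae_on (I P : R -> Prop) : Prop :=
  exists N, negligible N /\ forall t, I t -> ~ N t -> P t.

(* Absolute continuity of f on [a,b] (finite families of non-overlapping
   subintervals, listed in increasing order). *)
Definition abs_cont_on (f : R -> R) (a b : R) : Prop :=
  forall eps, 0 < eps -> exists delta, 0 < delta /\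
    forall (n : nat) (x y : nat -> R),
      (forall i, (i < n)%nat -> a <= x i /\ x i <= y i /\ y i <= b) ->
      (forall i, (S i < n)%nat -> y i <= x (S i)) ->
      rsum n (fun i => y i - x i) < delta ->
      rsum n (fun i => Rabs (f (y i) - f (x i))) < eps.

(* Filippov set-valued map of sgn:  SGN x = {1} (x>0), {-1} (x<0), [-1,1] (x=0). *)
Definition SGN (x s : R) : Prop :=
  (0 < x /\ s = 1) \/ (x < 0 /\ s = -1) \/ (x = 0 /\ -1 <= s <= 1).

Definition znorm (a b : R) : R := sqrt (a ^ 2 + b ^ 2).

Definition Qreg (B : R -> R) (eps theta : R) : Prop := - B theta > eps.

(* z = [e1; e2] is a Filippov solution on [t0, t1) of the closed-loop error system
     e1' = e2 - alpha e1,
     M e2' = chi - V e2 + B_k^s Omega^s [k1 e2 + (k2 + k3 |z| + k4 |z|^2) sgn(e2)],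
   s the leg with q(t) in Q^s.  All of M, V, chi, Omega^s are the given functions
   evaluated along the trajectory (functions of time); B_k^s are functions of q. *)
Definition closed_loop_filippov_sol
    (alpha eps k1 k2 k3 k4 : R)
    (M V chi BR BL OmR OmL q e1 e2 : R -> R) (t0 t1 : R) : Prop :=
  (forall T, t0 <= T < t1 -> abs_cont_on e1 t0 T /\ abs_cont_on e2 t0 T) /\
  ae_on (fun t => t0 < t < t1) (fun t =>
    derivable_pt_lim e1 t (e2 t - alpha * e1 t) /\
    exists de2 sigma,
      derivable_pt_lim e2 t de2 /\ SGN (e2 t) sigma /\
      ((Qreg BR eps (q t) /\
        M t * de2 = chi t - V t * e2 t + BR (q t) * OmR t *
          (k1 * e2 t + (k2 + k3 * znorm (e1 t) (e2 t)
                         + k4 * (znorm (e1 t) (e2 t)) ^ 2) * sigma)) \/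
       (Qreg BL eps (q t) /\
        M t * de2 = chi t - V t * e2 t + BL (q t) * OmL t *
          (k1 * e2 t + (k2 + k3 * znorm (e1 t) (e2 t)
                         + k4 * (znorm (e1 t) (e2 t)) ^ 2) * sigma)))).

(* Main.v *)
Require Import Defs.
From Stdlib Require Import Reals Lra Lia List ClassicalEpsilon Classical.
Import ListNotations.
Open Scope R_scope.

Lemma rsum_ext n f g : (forall i, (i < n)%nat -> f i = g i) -> rsum n f = rsum n g.
Proof. induction n; simpl; intros H; auto. rewrite IHn by (intros; apply H; lia). rewrite H by lia. auto. Qed.

Lemma rsum_le n f g : (forall i, (i < n)%nat -> f i <= g i) -> rsum n f <= rsum n g.
Proof. induction n; simpl; intros H; [lra|]. assert (rsum n f <= rsum n g) by (apply IHn; intros; apply H; lia).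
 assert (f n <= g n) by (apply H; lia). lra. Qed.

Lemma rsum_plus n f g : rsum n (fun i => f i + g i) = rsum n f + rsum n g.
Proof. induction n; simpl; [lra|]. rewrite IHn. lra. Qed.

Lemma rsum_scal n c f : rsum n (fun i => c * f i) = c * rsum n f.
Proof. induction n; simpl; [lra|]. rewrite IHn. lra. Qed.

Lemma rsum_nonneg n f : (forall i, (i < n)%nat -> 0 <= f i) -> 0 <= rsum n f.
Proof. intros H. replace 0 with (rsum n (fun _ => 0)). apply rsum_le; auto.
 clear H; induction n; simpl; auto; lra. Qed.

Lemma rsum_mono n m f : (n <= m)%nat -> (forall i, 0 <= f i) -> rsum n f <= rsum m f.
Proof. intros H Hf. induction H; [lra|]. simpl. specialize (Hf m). lra. Qed.

Lemma rsum_abs n f : Rabs (rsum n f) <= rsum n (fun i => Rabs (f i)).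
Proof. induction n; simpl. rewrite Rabs_R0; lra.
 eapply Rle_trans; [apply Rabs_triang|]. lra. Qed.

Lemma negligible_union N1 N2 : negligible N1 -> negligible N2 -> negligible (fun x => N1 x \/ N2 x).
Proof.
 intros H1 H2 eps He.
 destruct (H1 (eps/2)) as [a1 [b1 [C1 [L1 S1]]]]; [lra|].
 destruct (H2 (eps/2)) as [a2 [b2 [C2 [L2 S2]]]]; [lra|].
 exists (fun k => if Nat.even k then a1 (Nat.div2 k) else a2 (Nat.div2 k)).
 exists (fun k => if Nat.even k then b1 (Nat.div2 k) else b2 (Nat.div2 k)).
 split; [|split].
 - intros x [Hx|Hx].
   + destruct (C1 x Hx) as [k Hk]. exists (2*k)%nat. rewrite Nat.even_even, Nat.div2_double. auto.
   + destruct (C2 x Hx) as [k Hk]. exists (S (2*k))%nat.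
     replace (S (2*k)) with (2*k+1)%nat by lia. rewrite Nat.even_odd.
     replace (2*k+1)%nat with (S (2*k)) by lia. rewrite Nat.div2_succ_double. auto.
 - intros k. destruct (Nat.even k); auto.
 - intros n.
   set (g := fun k => (if Nat.even k then b1 (Nat.div2 k) else b2 (Nat.div2 k)) -
                      (if Nat.even k then a1 (Nat.div2 k) else a2 (Nat.div2 k))).
   assert (Hg : forall k, 0 <= g k). { intros k; unfold g; destruct (Nat.even k).
      specialize (L1 (Nat.div2 k)); lra. specialize (L2 (Nat.div2 k)); lra. }
   assert (E : forall m, rsum (2*m) g = rsum m (fun k => b1 k - a1 k) + rsum m (fun k => b2 k - a2 k)).
   { induction m. simpl; lra.
     replace (2 * S m)%nat with (S (S (2*m))) by lia.
     change (rsum (S (S (2*m))) g) with (rsum (2*m) g + g (2*m)%nat + g (S (2*m))). rewrite IHm. simpl rsum.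
     unfold g. replace (S (2*m)) with (2*m+1)%nat by lia. rewrite Nat.even_odd, Nat.even_even.
     replace (2*m+1)%nat with (S (2*m)) by lia. rewrite Nat.div2_succ_double, Nat.div2_double. lra. }
   eapply Rle_trans. apply (rsum_mono n (2*n) g); auto; lia.
   rewrite E. specialize (S1 n). specialize (S2 n). lra.
Qed.

Lemma negligible_single y : negligible (fun x => x = y).
Proof.
 intros eps He.
 exists (fun k => match k with O => y - eps/4 | _ => 0 end).
 exists (fun k => match k with O => y + eps/4 | _ => 0 end).
 split; [|split].
 - intros x ->. exists O. lra.
 - intros [|k]; lra.
 - intros n. destruct n. simpl; lra.
   assert (forall m, rsum (S m) (fun k => (match k with O => y + eps/4 | _ => 0 end) - (match k with O => y - eps/4 | _ => 0 end)) = eps/2).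
   { induction m. simpl. lra. simpl rsum. simpl in IHm. lra. }
   rewrite H. lra.
Qed.

Lemma dpl_ext f g x l : (forall t, f t = g t) -> derivable_pt_lim f x l -> derivable_pt_lim g x l.
Proof. intros H D eps Heps; destruct (D eps Heps) as [d Hd]; exists d; intros h Hh Hhd; rewrite <- !H; auto. Qed.

Lemma ac_sum f g a b : abs_cont_on f a b -> abs_cont_on g a b -> abs_cont_on (fun t => f t + g t) a b.
Proof.
 intros Hf Hg eps He.
 destruct (Hf (eps/2)) as [d1 [Hd1 H1]]; [lra|]. destruct (Hg (eps/2)) as [d2 [Hd2 H2]]; [lra|].
 exists (Rmin d1 d2). split. apply Rmin_glb_lt; auto.
 intros n x y Hxy Ho Hs.
 assert (A1 := H1 n x y Hxy Ho ltac:(pose proof (Rmin_l d1 d2); lra)).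
 assert (A2 := H2 n x y Hxy Ho ltac:(pose proof (Rmin_r d1 d2); lra)).
 eapply Rle_lt_trans. apply (rsum_le n _ (fun i => Rabs (f (y i) - f (x i)) + Rabs (g (y i) - g (x i)))).
 intros i _. replace (f (y i) + g (y i) - (f (x i) + g (x i))) with ((f (y i) - f (x i)) + (g (y i) - g (x i))) by ring.
 apply Rabs_triang. rewrite rsum_plus. lra.
Qed.

Lemma ac_scal c f a b : abs_cont_on f a b -> abs_cont_on (fun t => c * f t) a b.
Proof.
 intros Hf eps He.
 destruct (Hf (eps/(Rabs c + 1))) as [d [Hd H]]. { apply Rdiv_lt_0_compat; auto. pose proof (Rabs_pos c); lra. }
 exists d. split; auto. intros n x y Hxy Ho Hs.
 specialize (H n x y Hxy Ho Hs).
 rewrite (rsum_ext n _ (fun i => Rabs c * Rabs (f (y i) - f (x i)))).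
 2:{ intros; rewrite <- Rabs_mult; f_equal; ring. }
 rewrite rsum_scal. pose proof (Rabs_pos c).
 assert (Rabs c * rsum n (fun i => Rabs (f (y i) - f (x i))) <= Rabs c * (eps / (Rabs c + 1))).
 { apply Rmult_le_compat_l; lra. }
 assert (Rabs c * (eps / (Rabs c + 1)) < eps).
 { apply (Rmult_lt_reg_r (Rabs c + 1)). lra. field_simplify; lra. }
 lra.
Qed.

Lemma ac_bounded f a b : a <= b -> abs_cont_on f a b -> exists B, 0 <= B /\ forall x, a <= x <= b -> Rabs (f x) <= B.
Proof.
 intros Hab Hf. destruct (Hf 1) as [d [Hd H]]; [lra|].
 assert (C : forall m:nat, forall x, a <= x <= b -> x <= a + INR m * (d/2) -> Rabs (f x - f a) <= INR m).
 { induction m; intros x Hx Hm.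
   - simpl in Hm. replace x with a by lra. rewrite Rminus_diag, Rabs_R0. simpl; lra.
   - rewrite S_INR in Hm |- *. pose proof (pos_INR m).
     destruct (Rle_dec x (a + INR m * (d/2))) as [Hl|Hl]. specialize (IHm x Hx Hl). lra.
     set (y := a + INR m * (d/2)).
     assert (a <= y) by (unfold y; pose proof (Rmult_le_pos (INR m) (d/2)); lra).
     specialize (IHm y ltac:(unfold y in *; lra) ltac:(unfold y; lra)).
     specialize (H 1%nat (fun _ => y) (fun _ => x) ltac:(intros i Hi; unfold y in *; lra) ltac:(intros; lia)
          ltac:(simpl; unfold y in *; lra)).
     simpl in H.
     replace (f x - f a) with ((f x - f y) + (f y - f a)) by ring.
     eapply Rle_trans. apply Rabs_triang. lra. }
 destruct (INR_archimed (d/2) (b - a)) as [m Hm]; [lra|].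
 exists (Rabs (f a) + INR m). split. pose proof (Rabs_pos (f a)); pose proof (pos_INR m); lra.
 intros x Hx. specialize (C m x Hx ltac:(lra)).
 replace (f x) with ((f x - f a) + f a) by ring. eapply Rle_trans. apply Rabs_triang. lra.
Qed.

Lemma ac_mult f g a b : a <= b -> abs_cont_on f a b -> abs_cont_on g a b -> abs_cont_on (fun t => f t * g t) a b.
Proof.
 intros Hab Hf Hg.
 destruct (ac_bounded f a b Hab Hf) as [Bf [HBf Bfb]].
 destruct (ac_bounded g a b Hab Hg) as [Bg [HBg Bgb]].
 intros eps He.
 destruct (Hf (eps/2/(Bg+1))) as [d1 [Hd1 H1]]. { apply Rdiv_lt_0_compat; lra. }
 destruct (Hg (eps/2/(Bf+1))) as [d2 [Hd2 H2]]. { apply Rdiv_lt_0_compat; lra. }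
 exists (Rmin d1 d2). split. apply Rmin_glb_lt; auto.
 intros n x y Hxy Ho Hs.
 assert (A1 := H1 n x y Hxy Ho ltac:(pose proof (Rmin_l d1 d2); lra)).
 assert (A2 := H2 n x y Hxy Ho ltac:(pose proof (Rmin_r d1 d2); lra)).
 eapply Rle_lt_trans. apply (rsum_le n _ (fun i => Bf * Rabs (g (y i) - g (x i)) + Bg * Rabs (f (y i) - f (x i)))).
 { intros i Hi. destruct (Hxy i Hi) as [X1 [X2 X3]].
   replace (f (y i) * g (y i) - f (x i) * g (x i)) with (f (y i) * (g (y i) - g (x i)) + g (x i) * (f (y i) - f (x i))) by ring.
   eapply Rle_trans. apply Rabs_triang. rewrite !Rabs_mult.
   apply Rplus_le_compat; apply Rmult_le_compat_r; try apply Rabs_pos. apply Bfb; lra. apply Bgb; lra. }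
 rewrite rsum_plus, !rsum_scal.
 set (S1 := rsum n (fun i => Rabs (f (y i) - f (x i)))) in *.
 set (S2 := rsum n (fun i => Rabs (g (y i) - g (x i)))) in *.
 assert (Bf * S2 <= Bf * (eps/2/(Bf+1))) by (apply Rmult_le_compat_l; lra).
 assert (Bg * S1 <= Bg * (eps/2/(Bg+1))) by (apply Rmult_le_compat_l; lra).
 assert (Bf * (eps/2/(Bf+1)) < eps/2). { apply (Rmult_lt_reg_r (Bf + 1)). lra. field_simplify; lra. }
 assert (Bg * (eps/2/(Bg+1)) < eps/2). { apply (Rmult_lt_reg_r (Bg + 1)). lra. field_simplify; lra. }
 lra.
Qed.

Lemma ac_lip f a b L : 0 <= L -> (forall x y, a <= x <= b -> a <= y <= b -> Rabs (f y - f x) <= L * Rabs (y - x)) ->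
  abs_cont_on f a b.
Proof.
 intros HL Hl eps He. exists (eps/(L+1)). split. apply Rdiv_lt_0_compat; lra.
 intros n x y Hxy Ho Hs.
 eapply Rle_lt_trans. apply (rsum_le n _ (fun i => L * (y i - x i))).
 { intros i Hi. destruct (Hxy i Hi) as [X1 [X2 X3]]. rewrite <- (Rabs_right (y i - x i)) by lra. apply Hl; lra. }
 rewrite rsum_scal.
 assert (L * rsum n (fun i => y i - x i) <= L * (eps/(L+1))) by (apply Rmult_le_compat_l; lra).
 assert (L * (eps/(L+1)) < eps). { apply (Rmult_lt_reg_r (L + 1)). lra. field_simplify; lra. }
 lra.
Qed.

Lemma dpl_expc c x : derivable_pt_lim (fun t => exp (c * t)) x (c * exp (c * x)).
Proof.
 assert (D1 : derivable_pt_lim (fun t => c * t) x c).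
 { apply (dpl_ext (mult_real_fct c id)). intros; reflexivity.
   replace c with (c * 1) at 2 by ring. apply derivable_pt_lim_scal, derivable_pt_lim_id. }
 apply (dpl_ext (comp exp (fun t => c * t))). intros; reflexivity.
 rewrite Rmult_comm. apply derivable_pt_lim_comp; auto. apply derivable_pt_lim_exp.
Qed.

Lemma ac_expc c a b : abs_cont_on (fun t => exp (c * t)) a b.
Proof.
 set (K := exp (Rabs c * (Rabs a + Rabs b))).
 apply (ac_lip _ _ _ (Rabs c * K)). { apply Rmult_le_pos. apply Rabs_pos. unfold K; left; apply exp_pos. }
 assert (G : forall x y, a <= x <= b -> a <= y <= b -> x < y ->
   Rabs (exp (c*y) - exp (c*x)) <= Rabs c * K * Rabs (y - x)).
 { intros x y Hx Hy Hxy.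
   destruct (MVT_cor2 (fun t => exp (c*t)) (fun t => c * exp (c*t)) x y Hxy) as [z [Hz1 Hz2]].
   { intros; apply dpl_expc. }
   rewrite Hz1, !Rabs_mult. rewrite (Rabs_right (exp (c*z))) by (left; apply exp_pos).
   apply Rmult_le_compat_r. apply Rabs_pos. apply Rmult_le_compat_l. apply Rabs_pos.
   unfold K. assert (c * z <= Rabs c * (Rabs a + Rabs b)).
   { eapply Rle_trans. apply Rle_abs. rewrite Rabs_mult. apply Rmult_le_compat_l. apply Rabs_pos.
     unfold Rabs; repeat destruct Rcase_abs; lra. }
   destruct H. left; apply exp_increasing; auto. rewrite H; lra. }
 intros x y Hx Hy. destruct (Rtotal_order x y) as [Hl|[He|Hg]].
 - apply G; auto.
 - subst. rewrite !Rminus_diag, Rabs_R0. lra.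
 - rewrite Rabs_minus_sym, (Rabs_minus_sym y). apply G; auto.
Qed.

Inductive fchain (G : R -> R -> R -> Prop) : R -> list (R*R*R) -> R -> Prop :=
| fc_nil a : fchain G a nil a
| fc_cons u x v l b : u <= x <= v -> G u x v -> fchain G v l b -> fchain G u ((u,x,v)::l) b.

Lemma fchain_app G a l y x v : fchain G a l y -> y <= x <= v -> G y x v -> fchain G a (l ++ [(y,x,v)]) v.
Proof. induction 1; intros; simpl. constructor; auto. constructor. constructor; auto. Qed.

Lemma fchain_le G a l b : fchain G a l b -> a <= b.
Proof. induction 1; lra. Qed.

Lemma cousin (G : R -> R -> R -> Prop) a b : a <= b ->
  (forall x, a <= x <= b -> exists d, 0 < d /\ forall u v, u <= x <= v -> v - u < d -> G u x v) ->
  exists l, fchain G a l b.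
Proof.
 intros Hab Hg.
 set (E := fun y => a <= y <= b /\ exists l, fchain G a l y).
 assert (Eb : bound E). { exists b. intros y [Hy _]. lra. }
 assert (Ea : exists y, E y). { exists a. split. lra. exists nil. constructor. }
 destruct (completeness E Eb Ea) as [s [Hub Hlub]].
 assert (Has : a <= s). { apply Hub. split. lra. exists nil; constructor. }
 assert (Hsb : s <= b). { apply Hlub. intros y [Hy _]; lra. }
 destruct (Hg s ltac:(lra)) as [d [Hd Hgd]].
 assert (Hy : exists y, E y /\ s - d/2 < y).
 { apply NNPP. intros Hn. assert (s <= s - d/2). apply Hlub. intros y Ey.
   destruct (Rle_dec y (s - d/2)) as [?|Hc]; auto. exfalso; apply Hn. exists y; split; auto; lra. lra. }
 destruct Hy as [y [[Hy1 [l Hl]] Hy2]].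
 assert (Hys : y <= s) by (apply Hub; split; auto; exists l; auto).
 set (v := Rmin (s + d/2) b).
 assert (Hv1 : s <= v) by (unfold v; apply Rmin_glb; lra).
 assert (Hv2 : v <= s + d/2) by apply Rmin_l.
 assert (Hv3 : v <= b) by apply Rmin_r.
 assert (Cv : forall w, s <= w <= v -> fchain G a (l ++ [(y,s,w)]) w).
 { intros w Hw. apply fchain_app; auto. lra. apply Hgd; lra. }
 assert (Ev : E v). { split. lra. eexists; apply Cv; lra. }
 assert (v <= s) by (apply Hub; auto).
 assert (s = b). { unfold v in *. destruct (Rle_dec (s + d/2) b). rewrite Rmin_left in H; lra. rewrite Rmin_right in H; lra. }
 subst s. exists (l ++ [(y,b,v)]). replace b with v at 2 by lra. apply Cv. lra.
Qed.

Inductive ordered : R -> list (R*R) -> R -> Prop :=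
| ord_nil a b : a <= b -> ordered a nil b
| ord_cons a p q l b : a <= p -> p <= q -> ordered q l b -> ordered a ((p,q)::l) b.

Lemma ordered_le a l b : ordered a l b -> a <= b.
Proof. induction 1; lra. Qed.

Lemma ordered_weak a a' l b : ordered a l b -> a' <= a -> ordered a' l b.
Proof. intros H; inversion H; subst; intros; constructor; auto; lra. Qed.

Definition sumlen (L : list (R*R)) := fold_right (fun pq s => snd pq - fst pq + s) 0 L.
Definition sumabs (f : R -> R) (L : list (R*R)) := fold_right (fun pq s => Rabs (f (snd pq) - f (fst pq)) + s) 0 L.

Lemma ordered_nth a L b d : ordered a L b -> forall i, (i < length L)%nat ->
  a <= fst (nth i L d) /\ fst (nth i L d) <= snd (nth i L d) /\ snd (nth i L d) <= b.
Proof.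
 induction 1; simpl; intros i Hi. lia.
 pose proof (ordered_le _ _ _ H1).
 destruct i; simpl. lra. destruct (IHordered i ltac:(lia)). lra.
Qed.

Lemma ordered_nth2 a L b d : ordered a L b -> forall i, (S i < length L)%nat ->
  snd (nth i L d) <= fst (nth (S i) L d).
Proof.
 induction 1; simpl; intros i Hi. lia.
 destruct i; simpl. destruct (ordered_nth _ _ _ d H1 0%nat ltac:(lia)). simpl in *. lra.
 apply IHordered. lia.
Qed.

Lemma rsum_shift n f : rsum (S n) f = f O + rsum n (fun i => f (S i)).
Proof. induction n. simpl; lra. change (rsum (S (S n)) f) with (rsum (S n) f + f (S n)). rewrite IHn. simpl. lra. Qed.

Lemma rsum_list (g : R*R -> R) L d : rsum (length L) (fun i => g (nth i L d)) = fold_right (fun pq s => g pq + s) 0 L.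
Proof. induction L. simpl. auto. change (length (a::L)) with (S (length L)). rewrite rsum_shift. simpl. rewrite IHL. auto. Qed.

Lemma ordered_ac f a b eps d L : abs_cont_on f a b -> 0 < eps ->
  (forall (n : nat) (x y : nat -> R),
      (forall i, (i < n)%nat -> a <= x i /\ x i <= y i /\ y i <= b) ->
      (forall i, (S i < n)%nat -> y i <= x (S i)) ->
      rsum n (fun i => y i - x i) < d ->
      rsum n (fun i => Rabs (f (y i) - f (x i))) < eps) ->
  ordered a L b -> sumlen L < d -> sumabs f L < eps.
Proof.
 intros _ _ H Ho Hs.
 specialize (H (length L) (fun i => fst (nth i L (a,a))) (fun i => snd (nth i L (a,a)))
   (ordered_nth a L b (a,a) Ho) (ordered_nth2 a L b (a,a) Ho)).
 cbv beta in H. rewrite (rsum_list (fun pq => snd pq - fst pq)) in H.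
 rewrite (rsum_list (fun pq => Rabs (f (snd pq) - f (fst pq)))) in H.
 apply H. exact Hs.
Qed.

Lemma group_one lo L hi A B : ordered lo L hi ->
  (forall pq, In pq L -> fst pq = snd pq \/ (A <= fst pq /\ snd pq <= B)) ->
  sumlen L <= Rmax 0 (B - Rmax lo A).
Proof.
 induction 1; intros Hin; simpl. apply Rmax_l.
 assert (IH : sumlen l <= Rmax 0 (B - Rmax q A)) by (apply IHordered; intros; apply Hin; right; auto).
 destruct (Hin (p,q) ltac:(left; auto)) as [E|[E1 E2]]; simpl in *.
 - subst. unfold Rmax in *. repeat destruct Rle_dec; lra.
 - unfold Rmax in *. repeat destruct Rle_dec; lra.
Qed.

Definition insideb (A B : R) (pq : R*R) : bool :=
  if Rle_dec A (fst pq) then if Rle_dec (snd pq) B then true else false else false.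

Definition degen (P : R*R -> bool) (L : list (R*R)) :=
  map (fun pq => if P pq then pq else (fst pq, fst pq)) L.

Lemma ordered_degen P lo L hi : ordered lo L hi -> ordered lo (degen P L) hi.
Proof.
 induction 1; simpl. constructor; auto.
 destruct (P (p,q)); simpl; constructor; auto; try lra. apply (ordered_weak q); auto.
Qed.

Lemma sumlen_split P L : sumlen L = sumlen (degen P L) + sumlen (degen (fun pq => negb (P pq)) L).
Proof. induction L; simpl. lra. unfold sumlen in *. simpl. rewrite IHL. destruct (P a); simpl; lra. Qed.

Lemma group_lemma (a' b' : nat -> R) K : (forall k, a' k <= b' k) -> forall lo L hi, ordered lo L hi ->
  (forall pq, In pq L -> fst pq = snd pq \/ exists k, (k < K)%nat /\ a' k <= fst pq /\ snd pq <= b' k) ->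
  sumlen L <= rsum K (fun k => b' k - a' k).
Proof.
 intros Hab. induction K; intros lo L hi Ho Hin.
 - simpl. clear Ho. induction L; simpl. lra. unfold sumlen in *; simpl.
   destruct (Hin a (or_introl eq_refl)) as [E|[k [Hk _]]]; [|lia].
   rewrite E. assert (fold_right (fun pq s => snd pq - fst pq + s) 0 L <= 0). apply IHL. intros; apply Hin; right; auto. lra.
 - rewrite (sumlen_split (insideb (a' K) (b' K))). simpl.
   assert (H1 : sumlen (degen (insideb (a' K) (b' K)) L) <= b' K - a' K).
   { eapply Rle_trans. apply (group_one lo _ hi (a' K) (b' K)). apply ordered_degen; auto.
     intros pq Hpq. unfold degen in Hpq. apply in_map_iff in Hpq. destruct Hpq as [x [<- _]].
     unfold insideb. destruct Rle_dec. destruct Rle_dec. right; auto. left; auto. left; auto.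
     specialize (Hab K). unfold Rmax. repeat destruct Rle_dec; lra. }
   assert (H2 : sumlen (degen (fun pq => negb (insideb (a' K) (b' K) pq)) L) <= rsum K (fun k => b' k - a' k)).
   { apply (IHK lo _ hi). apply ordered_degen; auto.
     intros pq Hpq. unfold degen in Hpq. apply in_map_iff in Hpq. destruct Hpq as [x [<- Hx]].
     destruct (insideb (a' K) (b' K) x) eqn:Ei; simpl. left; auto.
     destruct (Hin x Hx) as [E|[k [Hk [Hk1 Hk2]]]]. left; auto. right.
     exists k. split; auto. destruct (Nat.eq_dec k K). subst. unfold insideb in Ei.
     destruct Rle_dec; [destruct Rle_dec|]; try discriminate; lra. lia. }
   lra.
Qed.

Definition Pimg (N : R -> Prop) (l : list (R*R*R)) : list (R*R) :=
  map (fun tr => if excluded_middle_informative (N (snd (fst tr))) then (fst (fst tr), snd tr)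
                 else (fst (fst tr), fst (fst tr))) l.

Lemma mono_key f a b N eps : a <= b -> abs_cont_on f a b -> negligible N -> 0 < eps ->
  (forall x, a <= x <= b -> ~ N x -> exists d, derivable_pt_lim f x d /\ d <= 0) ->
  f b - f a <= eps * (b - a) + eps.
Proof.
 intros Hab Hac HN He Hd.
 destruct (Hac eps He) as [dl [Hdl HAC]].
 destruct (HN (dl/2) ltac:(lra)) as [a' [b' [Cov [Lab Sab]]]].
 set (G := fun u x v => (N x -> exists k, a' k <= u /\ v <= b' k) /\ (~ N x -> f v - f u <= eps * (v - u))).
 destruct (cousin G a b Hab) as [l Hl].
 { intros x Hx. destruct (classic (N x)) as [Nx|Nx].
   - destruct (Cov x Nx) as [k Hk]. exists (Rmin (x - a' k) (b' k - x)). split. apply Rmin_glb_lt; lra.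
     intros u v Huv Hvu. pose proof (Rmin_l (x - a' k) (b' k - x)). pose proof (Rmin_r (x - a' k) (b' k - x)).
     split. intros _. exists k. lra. intros C; contradiction.
   - destruct (Hd x Hx Nx) as [d [Dd Dle]]. destruct (Dd eps He) as [del Hdel].
     exists (pos del). split. apply cond_pos. intros u v Huv Hvu. split. intros; contradiction. intros _.
     assert (A1 : f v - f x <= eps * (v - x)).
     { destruct (Req_dec v x). subst; lra.
       specialize (Hdel (v - x) ltac:(lra) ltac:(rewrite Rabs_right; lra)).
       replace (x + (v - x)) with v in Hdel by ring. apply Rabs_def2 in Hdel. destruct Hdel as [H1 H2].
       assert ((f v - f x) / (v - x) < eps) by lra.
       apply Rmult_lt_compat_r with (r := v - x) in H0; [|lra]. field_simplify in H0; lra. }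
     assert (A2 : f x - f u <= eps * (x - u)).
     { destruct (Req_dec u x). subst; lra.
       specialize (Hdel (u - x) ltac:(lra) ltac:(rewrite Rabs_left; lra)).
       replace (x + (u - x)) with u in Hdel by ring. apply Rabs_def2 in Hdel. destruct Hdel as [H1 H2].
       assert ((f u - f x) / (u - x) < eps) by lra.
       assert ((f u - f x) / (u - x) * (x - u) = - (f u - f x)) by (field; lra).
       apply Rmult_lt_compat_r with (r := x - u) in H0; [|lra]. lra. }
     lra. }
 assert (Ord : forall lo l hi, fchain G lo l hi -> ordered lo (Pimg N l) hi).
 { induction 1. constructor; lra. unfold Pimg; simpl. fold (Pimg N l).
   pose proof (fchain_le _ _ _ _ H1). destruct excluded_middle_informative; simpl.
   constructor; auto; lra. constructor; try lra. apply (ordered_weak v); auto. lra. }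
 assert (Est : forall lo l hi, fchain G lo l hi -> f hi - f lo <= eps * (hi - lo) + sumabs f (Pimg N l)).
 { induction 1. simpl. unfold sumabs; simpl. replace (a0 - a0) with 0 by ring. lra. unfold Pimg; simpl. fold (Pimg N l). destruct H0 as [G1 G2].
   assert (eps * (b0 - u) = eps * (b0 - v) + eps * (v - u)) by ring.
   destruct excluded_middle_informative; simpl.
   - pose proof (Rle_abs (f v - f u)). assert (0 <= eps * (v - u)) by (apply Rmult_le_pos; lra).
     unfold sumabs in *. simpl. fold (Pimg N l0). lra.
   - specialize (G2 n). unfold sumabs in *; simpl. fold (Pimg N l0). rewrite Rminus_diag, Rabs_R0. lra. }
 assert (Idx : forall lo l hi, fchain G lo l hi -> exists K, forall pq, In pq (Pimg N l) ->
            fst pq = snd pq \/ exists k, (k < K)%nat /\ a' k <= fst pq /\ snd pq <= b' k).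
 { induction 1. exists O. simpl; tauto. destruct IHfchain as [K HK]. destruct H0 as [G1 G2].
   unfold Pimg; simpl. fold (Pimg N l). destruct excluded_middle_informative as [Nx|Nx].
   - destruct (G1 Nx) as [k Hk]. exists (S (Nat.max k K)). intros pq [<-|Hpq].
     right. exists k. simpl. split; [lia|lra].
     destruct (HK pq Hpq) as [?|[k' ?]]. left; auto. right. exists k'. split; [lia|tauto].
   - exists K. intros pq [<-|Hpq]. left; auto. auto. }
 destruct (Idx _ _ _ Hl) as [K HK].
 pose proof (group_lemma a' b' K Lab a _ b (Ord _ _ _ Hl) HK).
 specialize (Sab K).
 assert (sumabs f (Pimg N l) < eps). { eapply ordered_ac; eauto. lra. }
 specialize (Est _ _ _ Hl). lra.
Qed.

Lemma mono_ae f a b N : a <= b -> abs_cont_on f a b -> negligible N ->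
  (forall x, a <= x <= b -> ~ N x -> exists d, derivable_pt_lim f x d /\ d <= 0) ->
  f b <= f a.
Proof.
 intros Hab Hac HN Hd. apply Rnot_lt_le. intros Hlt.
 set (D := f b - f a). set (eps := D / (2 * (b - a + 1))).
 assert (He : 0 < eps) by (unfold eps, D; apply Rdiv_lt_0_compat; lra).
 pose proof (mono_key f a b N eps Hab Hac HN He Hd).
 assert (eps * (b - a) + eps = D / 2) by (unfold eps; field; lra).
 unfold D in *. lra.
Qed.

Lemma znorm_sq a b : znorm a b * znorm a b = a * a + b * b /\ 0 <= znorm a b.
Proof. unfold znorm. split. rewrite sqrt_sqrt. ring. nra. apply sqrt_pos. Qed.

Lemma key_ineq alpha eps cm cM cOm1 c1 c2 c3 k1 k2 k3 k4 c gamma1 lambda2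
  e1 e2 Mx dM Vx chi B Om de2 sigma :
  0 < eps -> 0 < cOm1 -> 0 < k1 -> 0 < k2 -> 0 < k3 -> 0 < k4 ->
  k2 >= c1 / (eps * cOm1) -> k3 >= c2 / (eps * cOm1) -> k4 >= c3 / (eps * cOm1) ->
  gamma1 <= alpha - /2 -> gamma1 <= eps * cOm1 * k1 - /2 -> 0 < lambda2 ->
  /2 <= lambda2 -> cM/2 <= lambda2 -> c = gamma1 / lambda2 -> 0 <= gamma1 ->
  cm <= Mx <= cM -> 0 < cm ->
  /2 * dM - Vx = 0 -> - B > eps -> cOm1 <= Om -> SGN e2 sigma ->
  Rabs chi <= c1 + c2 * znorm e1 e2 + c3 * znorm e1 e2 ^ 2 ->
  Mx * de2 = chi - Vx * e2 + B * Om * (k1 * e2 + (k2 + k3 * znorm e1 e2 + k4 * znorm e1 e2 ^ 2) * sigma) ->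
  c * (/2 * (e1 * e1) + /2 * (Mx * (e2 * e2))) +
  (/2 * ((e2 - alpha * e1) * e1 + e1 * (e2 - alpha * e1)) + /2 * (dM * (e2 * e2) + Mx * (de2 * e2 + e2 * de2))) <= 0.
Proof.
 intros Heps HO Hk1 Hk2 Hk3 Hk4 G2 G3 G4 Hg1 Hg2 Hl2 Hl2a Hl2b Hc Hg0 HM Hcm Hsk HB HOm Hsg Hchi Hde2.
 destruct (znorm_sq e1 e2) as [Hn Hn0]. set (n := znorm e1 e2) in *.
 set (P := eps * cOm1). fold P in G2, G3, G4.
 assert (HP : 0 < P) by (unfold P; nra).
 assert (HBO : B * Om <= - P). { unfold P. assert (eps * cOm1 <= (-B) * Om) by (apply Rmult_le_compat; lra). lra. }
 assert (Hse : sigma * e2 = Rabs e2). { destruct Hsg as [[? ->]|[[? ->]|[-> ?]]]. rewrite Rabs_right; lra. rewrite Rabs_left; lra. rewrite Rabs_R0; lra. }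
 set (Kn := k2 + k3 * n + k4 * n ^ 2) in *.
 assert (HK : c1 + c2 * n + c3 * n ^ 2 <= P * Kn).
 { unfold Kn. assert (c1 <= P * k2). { assert (c1 / P * P = c1) by (field; lra). nra. }
   assert (c2 <= P * k3). { assert (c2 / P * P = c2) by (field; lra). nra. }
   assert (c3 <= P * k4). { assert (c3 / P * P = c3) by (field; lra). nra. }
   assert (c2 * n <= P * k3 * n) by (apply Rmult_le_compat_r; lra).
   assert (c3 * n^2 <= P * k4 * n^2) by (apply Rmult_le_compat_r; nra). nra. }
 assert (HKn : 0 <= Kn) by (unfold Kn; nra).
 assert (Hchi2 : e2 * chi <= Rabs e2 * (P * Kn)).
 { eapply Rle_trans. apply Rle_abs. rewrite Rabs_mult. apply Rmult_le_compat_l. apply Rabs_pos. lra. }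
 assert (H1 : B * Om * Kn * Rabs e2 <= - P * Kn * Rabs e2).
 { apply Rmult_le_compat_r. apply Rabs_pos. apply Rmult_le_compat_r; lra. }
 assert (H2 : B * Om * k1 * (e2 * e2) <= - P * k1 * (e2 * e2)).
 { apply Rmult_le_compat_r. nra. apply Rmult_le_compat_r; lra. }
 assert (HdV : Mx * de2 * e2 = e2 * chi - Vx * (e2*e2) + B * Om * k1 * (e2 * e2) + B * Om * Kn * (sigma * e2)).
 { rewrite Hde2. ring. }
 rewrite Hse in HdV.
 assert (Hd : /2 * ((e2 - alpha * e1) * e1 + e1 * (e2 - alpha * e1)) + /2 * (dM * (e2 * e2) + Mx * (de2 * e2 + e2 * de2))
   <= - gamma1 * (e1 * e1 + e2 * e2)).
 { replace (/2 * ((e2 - alpha * e1) * e1 + e1 * (e2 - alpha * e1)) + /2 * (dM * (e2 * e2) + Mx * (de2 * e2 + e2 * de2)))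
     with (e1 * e2 - alpha * (e1 * e1) + (/2 * dM - Vx) * (e2 * e2) + (Mx * de2 * e2 + Vx * (e2*e2))) by field.
   rewrite Hsk, HdV.
   assert (e1 * e2 <= /2 * (e1*e1) + /2 * (e2*e2)) by (pose proof (Rle_0_sqr (e1 - e2)); unfold Rsqr in *; nra).
   assert ((alpha - /2 - gamma1) * (e1*e1) >= 0) by nra.
   assert ((P * k1 - /2 - gamma1) * (e2*e2) >= 0) by (unfold P in *; nra).
   nra. }
 assert (Hv : c * (/2 * (e1 * e1) + /2 * (Mx * (e2 * e2))) <= gamma1 * (e1 * e1 + e2 * e2)).
 { assert (Hc0 : 0 <= c) by (rewrite Hc; unfold Rdiv; apply Rmult_le_pos; [lra|left; apply Rinv_0_lt_compat; lra]).
   assert (/2 * (e1 * e1) + /2 * (Mx * (e2 * e2)) <= lambda2 * (e1*e1 + e2*e2)) by nra.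
   apply (Rmult_le_compat_l c) in H; auto.
   assert (c * lambda2 = gamma1) by (rewrite Hc; field; lra).
   replace (c * (lambda2 * (e1 * e1 + e2 * e2))) with (gamma1 * (e1 * e1 + e2 * e2)) in H by (rewrite <- H0; ring).
   exact H. }
 lra.
Qed.
Theorem theorem1
  (alpha eps cm cM cOm1 cOm2 c1 c2 c3 k1 k2 k3 k4 t0 t1 : R)
  (q qd e1 e2 M V chi BR BL OmR OmL : R -> R)
  (Halpha : 0 < alpha) (Heps : 0 < eps)
  (Hcm : 0 < cm) (HcM : 0 < cM) (HcOm1 : 0 < cOm1) (HcOm2 : 0 < cOm2)
  (Hc1 : 0 < c1) (Hc2 : 0 < c2) (Hc3 : 0 < c3)
  (Hk1 : 0 < k1) (Hk2 : 0 < k2) (Hk3 : 0 < k3) (Hk4 : 0 < k4)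
  (* standing assumptions *)
  (HM : forall t, cm <= M t <= cM)
  (HOm : forall t, (cOm1 <= OmR t <= cOm2) /\ (cOm1 <= OmL t <= cOm2))
  (Hdisj : forall th, ~ (Qreg BR eps th /\ Qreg BL eps th))
  (HMac : forall T, t0 <= T < t1 -> abs_cont_on M t0 T)
  (Hskew : ae_on (fun t => t0 < t < t1)
             (fun t => exists dM, derivable_pt_lim M t dM /\ / 2 * dM - V t = 0))
  (Hchi : forall t, Rabs (chi t) <= c1 + c2 * znorm (e1 t) (e2 t)
                                     + c3 * (znorm (e1 t) (e2 t)) ^ 2)
  (* errors *)
  (He1 : forall t, e1 t = qd t - q t)
  (* the n-th controlled interval (t_n^on, t_n^off) *)
  (Ht : t0 < t1)
  (Hreg : forall t, t0 < t < t1 -> Qreg BR eps (q t) \/ Qreg BL eps (q t))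
  (Hsol : closed_loop_filippov_sol alpha eps k1 k2 k3 k4
            M V chi BR BL OmR OmL q e1 e2 t0 t1)
  (* gain conditions *)
  (Ga : alpha > / 2)
  (G1 : k1 > / (2 * eps * cOm1))
  (G2 : k2 >= c1 / (eps * cOm1))
  (G3 : k3 >= c2 / (eps * cOm1))
  (G4 : k4 >= c3 / (eps * cOm1)) :
  let gamma1 := Rmin (alpha - / 2) (eps * cOm1 * k1 - / 2) in
  let lambda1 := Rmin (/ 2) (cm / 2) in
  let lambda2 := Rmax (/ 2) (cM / 2) in
  forall t, t0 < t < t1 ->
    znorm (e1 t) (e2 t) <=
      sqrt (lambda2 / lambda1) * znorm (e1 t0) (e2 t0)
        * exp (- (gamma1 / (2 * lambda2)) * (t - t0)).
Proof.
  intros gamma1 lambda1 lambda2 t Htt.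
  assert (Hl1 : 0 < lambda1) by (unfold lambda1, Rmin; destruct Rle_dec; lra).
  assert (Hl1a : lambda1 <= /2) by apply Rmin_l.
  assert (Hl1b : lambda1 <= cm/2) by apply Rmin_r.
  assert (Hl2a : /2 <= lambda2) by apply Rmax_l.
  assert (Hl2b : cM/2 <= lambda2) by apply Rmax_r.
  assert (Hl2 : 0 < lambda2) by lra.
  assert (HP1 : eps * cOm1 * k1 > /2).
  { assert (eps * cOm1 > 0) by nra. assert (/(2*eps*cOm1) * (eps*cOm1) = /2) by (field; lra). nra. }
  assert (Hg1a : gamma1 <= alpha - /2) by apply Rmin_l.
  assert (Hg1b : gamma1 <= eps * cOm1 * k1 - /2) by apply Rmin_r.
  assert (Hg0 : 0 < gamma1) by (unfold gamma1, Rmin; destruct Rle_dec; lra).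
  set (c := gamma1 / lambda2).
  set (Vf := fun s => /2 * (e1 s * e1 s) + /2 * (M s * (e2 s * e2 s))).
  set (W := fun s => exp (c * s) * Vf s).
  destruct Hsol as [Hac Hae]. destruct Hae as [N1 [HN1 HP]]. destruct Hskew as [N2 [HN2 HQ]].
  set (N := fun x => (N1 x \/ N2 x) \/ (x = t0 \/ x = t)).
  assert (HN : negligible N). { apply negligible_union. apply negligible_union; auto. apply negligible_union; apply negligible_single. }
  destruct (Hac t ltac:(lra)) as [Ac1 Ac2]. pose proof (HMac t ltac:(lra)) as AcM.
  assert (AcW : abs_cont_on W t0 t).
  { unfold W, Vf. apply ac_mult. lra. apply ac_expc.
    apply ac_sum; apply ac_scal. apply ac_mult; auto; lra. apply ac_mult; auto. lra. apply ac_mult; auto; lra. }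
  assert (Mono : W t <= W t0).
  { apply (mono_ae W t0 t N); auto; try lra.
    intros x Hx Nx. unfold N in Nx.
    assert (Hx' : t0 < x < t1) by (destruct Hx; split; [destruct H; auto; subst; tauto | lra]).
    assert (Hx'' : x < t) by (destruct Hx as [_ [?|?]]; auto; subst; tauto).
    destruct (HP x Hx' ltac:(tauto)) as [D1 [de2 [sigma [D2 [Hsg Hbr]]]]].
    destruct (HQ x Hx' ltac:(tauto)) as [dM [DM Hsk]].
    set (de1 := e2 x - alpha * e1 x) in *.
    assert (E11 : derivable_pt_lim (fun s => e1 s * e1 s) x (de1 * e1 x + e1 x * de1)).
    { apply (dpl_ext (mult_fct e1 e1)). reflexivity. apply (derivable_pt_lim_mult e1 e1 x de1 de1); auto. }
    assert (E22 : derivable_pt_lim (fun s => e2 s * e2 s) x (de2 * e2 x + e2 x * de2)).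
    { apply (dpl_ext (mult_fct e2 e2)). reflexivity. apply (derivable_pt_lim_mult e2 e2 x de2 de2); auto. }
    assert (EM : derivable_pt_lim (fun s => M s * (e2 s * e2 s)) x (dM * (e2 x * e2 x) + M x * (de2 * e2 x + e2 x * de2))).
    { apply (dpl_ext (mult_fct M (fun s => e2 s * e2 s))). reflexivity. apply (derivable_pt_lim_mult M (fun s => e2 s * e2 s) x dM (de2 * e2 x + e2 x * de2)); auto. }
    assert (EV : derivable_pt_lim Vf x (/2 * (de1 * e1 x + e1 x * de1) + /2 * (dM * (e2 x * e2 x) + M x * (de2 * e2 x + e2 x * de2)))).
    { apply (dpl_ext (plus_fct (mult_real_fct (/2) (fun s => e1 s * e1 s)) (mult_real_fct (/2) (fun s => M s * (e2 s * e2 s))))).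
      reflexivity. apply (derivable_pt_lim_plus _ _ x (/2 * (de1 * e1 x + e1 x * de1)) (/2 * (dM * (e2 x * e2 x) + M x * (de2 * e2 x + e2 x * de2)))); apply derivable_pt_lim_scal; auto. }
    assert (EW : derivable_pt_lim W x (c * exp (c * x) * Vf x + exp (c * x) * (/2 * (de1 * e1 x + e1 x * de1) + /2 * (dM * (e2 x * e2 x) + M x * (de2 * e2 x + e2 x * de2))))).
    { apply (dpl_ext (mult_fct (fun s => exp (c * s)) Vf)). reflexivity. apply (derivable_pt_lim_mult (fun s => exp (c * s)) Vf x (c * exp (c * x))); auto. apply dpl_expc. }
    eexists; split; [exact EW|].
    replace (c * exp (c * x) * Vf x + exp (c * x) * (/2 * (de1 * e1 x + e1 x * de1) + /2 * (dM * (e2 x * e2 x) + M x * (de2 * e2 x + e2 x * de2))))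
      with (exp (c * x) * (c * (/2 * (e1 x * e1 x) + /2 * (M x * (e2 x * e2 x))) + (/2 * (de1 * e1 x + e1 x * de1) + /2 * (dM * (e2 x * e2 x) + M x * (de2 * e2 x + e2 x * de2))))) by (unfold Vf; ring).
    assert (Key : c * (/2 * (e1 x * e1 x) + /2 * (M x * (e2 x * e2 x))) + (/2 * (de1 * e1 x + e1 x * de1) + /2 * (dM * (e2 x * e2 x) + M x * (de2 * e2 x + e2 x * de2))) <= 0).
    { pose proof (HOm x) as [HOR HOL].
      destruct Hbr as [[Hq Hm]|[Hq Hm]].
      - eapply (key_ineq alpha eps cm cM cOm1 c1 c2 c3 k1 k2 k3 k4 c gamma1 lambda2 (e1 x) (e2 x) (M x) dM (V x) (chi x) (BR (q x)) (OmR x) de2 sigma); eauto; try lra.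
      - eapply (key_ineq alpha eps cm cM cOm1 c1 c2 c3 k1 k2 k3 k4 c gamma1 lambda2 (e1 x) (e2 x) (M x) dM (V x) (chi x) (BL (q x)) (OmL x) de2 sigma); eauto; try lra. }
    pose proof (exp_pos (c * x)). nra. }
  destruct (znorm_sq (e1 t) (e2 t)) as [Hn Hn0]. destruct (znorm_sq (e1 t0) (e2 t0)) as [Hm Hm0].
  set (n := znorm (e1 t) (e2 t)) in *. set (n0 := znorm (e1 t0) (e2 t0)) in *.
  set (y := - (gamma1 / (2 * lambda2)) * (t - t0)).
  set (E := exp y * exp y).
  assert (HE : exp (c * t0) = exp (c * t) * E).
  { unfold E. rewrite <- !exp_plus. f_equal. unfold y, c. field. lra. }
  assert (HEp : 0 < E) by (unfold E; pose proof (exp_pos y); nra).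
  unfold W in Mono. rewrite HE in Mono.
  assert (HV1 : Vf t <= E * Vf t0).
  { pose proof (exp_pos (c * t)). apply (Rmult_le_reg_l (exp (c * t))); auto. lra. }
  assert (HV2 : lambda1 * (n * n) <= Vf t).
  { unfold Vf. rewrite Hn. pose proof (HM t). assert (0 <= e2 t * e2 t) by nra. nra. }
  assert (HV3 : Vf t0 <= lambda2 * (n0 * n0)).
  { unfold Vf. rewrite Hm. pose proof (HM t0). assert (0 <= e2 t0 * e2 t0) by nra. nra. }
  set (s := sqrt (lambda2 / lambda1)).
  assert (Hs : s * s = lambda2 / lambda1) by (apply sqrt_sqrt; unfold Rdiv; apply Rmult_le_pos; [lra|left; apply Rinv_0_lt_compat; lra]).
  assert (Hs0 : 0 <= s) by apply sqrt_pos.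
  assert (Hn2 : n * n <= s * s * (n0 * n0) * E).
  { rewrite Hs. assert (lambda1 * (n * n) <= lambda2 * (n0 * n0) * E).
    { assert (E * Vf t0 <= E * (lambda2 * (n0 * n0))) by (apply Rmult_le_compat_l; lra). lra. }
    apply (Rmult_le_reg_l lambda1); auto. replace (lambda1 * (lambda2 / lambda1 * (n0 * n0) * E)) with (lambda2 * (n0 * n0) * E) by (field; lra). lra. }
  fold y. pose proof (exp_pos y).
  apply Rnot_lt_le. intros Hc.
  assert (0 <= s * n0 * exp y) by (apply Rmult_le_pos; [apply Rmult_le_pos|]; lra).
  assert ((s * n0 * exp y) * (s * n0 * exp y) < n * n) by nra.
  unfold E in Hn2. nra.
Qed.
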